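(* Let $a>0$ and let $\phi$ be a random variable on $[0,2\pi]$ with density $f_\Phi(\phi)=\frac{\exp(-a\cos\phi)}{2\pi I_0(a)}$. Then $$\mathbb{E}\!\left[\exp(a e^{i\phi})\right]=\frac{J_0(a)}{I_0(a)},\qquad \mathbb{E}\!\left[\left|\exp(a e^{i\phi})\right|^2\right]=1.$$ In particular, if $a$ is a positive zero of $J_0$, then $\mathbb{E}[\exp(a e^{i\phi})]=0$ and $\mathbb{E}[|\exp(a e^{i\phi})|^2]=1$.
   Context: $J_0$ is the Bessel function of the first kind of order $0$ and $I_0$ is the modified Bessel function of the first kind of order $0$. *)

(* Defs.v *)
From Stdlib Require Import Reals Factorial.
From Coquelicot Require Import Coquelicot.
Open Scope R_scope.

Definition cexp (z : C) : C :=
  (exp (Re z) * cos (Im z), exp (Re z) * sin (Im z)).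

Definition J0 (x : R) : R :=
  Series (fun k => (-1) ^ k * (x / 2) ^ (2 * k) / (INR (Factorial.fact k)) ^ 2).

Definition I0 (x : R) : R :=
  Series (fun k => (x / 2) ^ (2 * k) / (INR (Factorial.fact k)) ^ 2).

Definition density_Phi (a phi : R) : R :=
  exp (- a * cos phi) / (2 * PI * I0 a).

Definition expect_C (a : R) (g : R -> C) : C :=
  RInt (V := C_R_CompleteNormedModule)
    (fun phi => scal (density_Phi a phi) (g phi)) 0 (2 * PI).

Definition expect_R (a : R) (h : R -> R) : R :=
  RInt (fun phi => density_Phi a phi * h phi) 0 (2 * PI).

(* Main.v *)
Require Import Defs.
From Stdlib Require Import Reals Lra Lia Factorial.
From Coquelicot Require Import Coquelicot.
Open Scope R_scope.

Lemma cont_pow_cos n x : continuous (fun t => cos t ^ n) x.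
Proof. apply (ex_derive_continuous (K:=R_AbsRing) (V:=R_NormedModule)); auto_derive; auto. Qed.
Lemma cont_pow_sin n x : continuous (fun t => sin t ^ n) x.
Proof. apply (ex_derive_continuous (K:=R_AbsRing) (V:=R_NormedModule)); auto_derive; auto. Qed.
Lemma exR_cos n : ex_RInt (fun t => cos t ^ n) 0 (2*PI).
Proof. apply (ex_RInt_continuous (V:=R_CompleteNormedModule)); intros; apply cont_pow_cos. Qed.
Lemma exR_sin n : ex_RInt (fun t => sin t ^ n) 0 (2*PI).
Proof. apply (ex_RInt_continuous (V:=R_CompleteNormedModule)); intros; apply cont_pow_sin. Qed.

Definition Cn n := RInt (fun t => cos t ^ n) 0 (2*PI).
Definition Sn n := RInt (fun t => sin t ^ n) 0 (2*PI).

Lemma Cn_rec n : (INR n + 2) * Cn (S (S n)) = (INR n + 1) * Cn n.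
Proof.
  assert (H : is_RInt (fun x => (INR n + 2) * cos x ^ (S (S n)) - (INR n + 1) * cos x ^ n) 0 (2*PI)
     (minus (sin (2*PI) * cos (2*PI) ^ (S n)) (sin 0 * cos 0 ^ (S n)))).
  { apply (is_RInt_derive (V:=R_CompleteNormedModule) (fun x => sin x * cos x ^ (S n))).
    - intros x _. auto_derive; auto.
      replace (match n with | 0%nat => 1 | S _ => INR n + 1 end) with (INR n + 1) by (destruct n; simpl; ring).
      assert (E : sin x * sin x = 1 - cos x * cos x) by (rewrite <- (sin2_cos2 x); unfold Rsqr; ring).
      transitivity (cos x * cos x * cos x ^ n - (INR n + 1) * (sin x * sin x) * cos x ^ n). ring.
      rewrite E. simpl; ring.
    - intros y _. apply (ex_derive_continuous (K:=R_AbsRing) (V:=R_NormedModule)); auto_derive; auto. }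
  rewrite sin_2PI, sin_0 in H.
  replace (minus (0 * cos (2 * PI) ^ S n) (0 * cos 0 ^ S n)) with 0 in H
    by (unfold minus, plus, opp; simpl; ring).
  assert (H2 : is_RInt (fun x => (INR n + 2) * cos x ^ (S (S n)) - (INR n + 1) * cos x ^ n) 0 (2*PI)
     ((INR n + 2) * Cn (S (S n)) - (INR n + 1) * Cn n)).
  { apply (is_RInt_minus (V:=R_NormedModule)); apply (is_RInt_scal (V:=R_NormedModule));
    apply (RInt_correct (V:=R_CompleteNormedModule)); apply exR_cos. }
  apply (is_RInt_unique (V:=R_CompleteNormedModule)) in H.
  apply (is_RInt_unique (V:=R_CompleteNormedModule)) in H2. lra.
Qed.

Lemma Sn_rec n : (INR n + 2) * Sn (S (S n)) = (INR n + 1) * Sn n.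
Proof.
  assert (H : is_RInt (fun x => (INR n + 1) * sin x ^ n - (INR n + 2) * sin x ^ (S (S n))) 0 (2*PI)
     (minus (cos (2*PI) * sin (2*PI) ^ (S n)) (cos 0 * sin 0 ^ (S n)))).
  { apply (is_RInt_derive (V:=R_CompleteNormedModule) (fun x => cos x * sin x ^ (S n))).
    - intros x _. auto_derive; auto.
      replace (match n with | 0%nat => 1 | S _ => INR n + 1 end) with (INR n + 1) by (destruct n; simpl; ring).
      assert (E : cos x * cos x = 1 - sin x * sin x) by (rewrite <- (sin2_cos2 x); unfold Rsqr; ring).
      transitivity (- (sin x * sin x) * sin x ^ n + (INR n + 1) * (cos x * cos x) * sin x ^ n). ring.
      rewrite E. simpl; ring.
    - intros y _. apply (ex_derive_continuous (K:=R_AbsRing) (V:=R_NormedModule)); auto_derive; auto. }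
  rewrite sin_2PI, sin_0 in H.
  replace (minus (cos (2 * PI) * 0 ^ S n) (cos 0 * 0 ^ S n)) with 0 in H
    by (unfold minus, plus, opp; simpl; ring).
  assert (H2 : is_RInt (fun x => (INR n + 1) * sin x ^ n - (INR n + 2) * sin x ^ (S (S n))) 0 (2*PI)
     ((INR n + 1) * Sn n - (INR n + 2) * Sn (S (S n)))).
  { apply (is_RInt_minus (V:=R_NormedModule)); apply (is_RInt_scal (V:=R_NormedModule));
    apply (RInt_correct (V:=R_CompleteNormedModule)); apply exR_sin. }
  apply (is_RInt_unique (V:=R_CompleteNormedModule)) in H.
  apply (is_RInt_unique (V:=R_CompleteNormedModule)) in H2. lra.
Qed.

Lemma Cn0 : Cn 0 = 2 * PI.
Proof.
  unfold Cn.
  assert (H : is_RInt (fun x => cos x ^ 0) 0 (2*PI) (minus (2*PI) 0)).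
  { apply (is_RInt_derive (V:=R_CompleteNormedModule) (fun x => x)).
    - intros x _. auto_derive; auto.
    - intros y _. apply (ex_derive_continuous (K:=R_AbsRing) (V:=R_NormedModule)); auto_derive; auto. }
  apply (is_RInt_unique (V:=R_CompleteNormedModule)) in H. rewrite H. unfold minus, plus, opp; simpl; ring.
Qed.

Lemma Sn0 : Sn 0 = 2 * PI.
Proof. exact Cn0. Qed.

Lemma Cn1 : Cn 1 = 0.
Proof.
  unfold Cn.
  assert (H : is_RInt (fun x => cos x ^ 1) 0 (2*PI) (minus (sin (2*PI)) (sin 0))).
  { apply (is_RInt_derive (V:=R_CompleteNormedModule) (fun x => sin x)).
    - intros x _. auto_derive; auto. ring.
    - intros y _. apply (ex_derive_continuous (K:=R_AbsRing) (V:=R_NormedModule)); auto_derive; auto. }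
  apply (is_RInt_unique (V:=R_CompleteNormedModule)) in H. rewrite H, sin_2PI, sin_0. unfold minus, plus, opp; simpl; ring.
Qed.

Lemma rec_even (u : nat -> R) : u 0%nat = 2 * PI ->
  (forall n, (INR n + 2) * u (S (S n)) = (INR n + 1) * u n) ->
  forall k, u (2*k)%nat / INR (fact (2*k)) = 2 * PI / (4 ^ k * INR (fact k) ^ 2).
Proof.
  intros H0 Hr k. induction k.
  - simpl. rewrite H0. field.
  - replace (2 * S k)%nat with (S (S (2*k))) by lia.
    assert (Hu : u (S (S (2*k))) = (INR (2*k) + 1) / (INR (2*k) + 2) * u (2*k)%nat).
    { pose proof (Hr (2*k)%nat). pose proof (pos_INR (2*k)). field_simplify_eq; [|lra]. lra. }
    rewrite Hu. rewrite !fact_simpl, !mult_INR, !S_INR.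
    pose proof (INR_fact_neq_0 (2*k)). pose proof (INR_fact_neq_0 k). pose proof (pos_INR k).
    rewrite mult_INR in *. simpl INR in *.
    apply (f_equal (fun r => r / (4 * (INR k + 1)^2))) in IHk.
    replace (2 * PI / (4 ^ S k * (((INR k + 1) * INR (fact k)) ^ 2))) with (2 * PI / (4 ^ k * INR (fact k) ^ 2) / (4 * (INR k + 1) ^ 2)) by (simpl; field; repeat split; try lra; apply pow_nonzero; lra).
    rewrite <- IHk. field. repeat split; try lra.
Qed.

Lemma rec_odd (u : nat -> R) : u 1%nat = 0 ->
  (forall n, (INR n + 2) * u (S (S n)) = (INR n + 1) * u n) ->
  forall k, u (S (2*k)) = 0.
Proof.
  intros H1 Hr k. induction k.
  - exact H1.
  - replace (S (2 * S k)) with (S (S (S (2*k)))) by lia.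
    pose proof (Hr (S (2*k))). rewrite IHk in H. pose proof (pos_INR (S (2*k))). nra.
Qed.

Lemma tail_eq (a : nat -> R) (l : R) N : is_series a l ->
  is_series (fun k => a (S N + k)%nat) (l - sum_n a N).
Proof.
  intros H. apply (is_series_incr_n (V:=R_NormedModule) a (S N)). lia.
  match goal with |- is_series _ ?x => replace x with l; [exact H|] end. simpl. change (l = l - sum_n a N + sum_n a N). ring.
Qed.

Lemma tail_lim (b : nat -> R) : ex_series b ->
  is_lim_seq (fun N => Series b - sum_n b N) 0.
Proof.
  intros Hb. replace 0 with (Series b - Series b) by ring.
  apply is_lim_seq_minus'. apply is_lim_seq_const.
  pose proof (Series_correct _ Hb). exact H.
Qed.

Lemma tail_bound (a b : nat -> R) (l : R) N :
  is_series a l -> ex_series b -> (forall n, Rabs (a n) <= b n) ->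
  Rabs (l - sum_n a N) <= Series b - sum_n b N.
Proof.
  intros Ha Hb Hab.
  pose proof (tail_eq a l N Ha) as Ta.
  pose proof (tail_eq b (Series b) N (Series_correct _ Hb)) as Tb.
  apply is_series_unique in Ta. apply is_series_unique in Tb.
  rewrite <- Ta, <- Tb.
  assert (Eb : ex_series (fun k => b (S N + k)%nat)) by (eexists; apply (tail_eq b (Series b) N (Series_correct _ Hb))).
  assert (Ea : ex_series (fun k => Rabs (a (S N + k)%nat))).
  { apply (ex_series_le (K:=R_AbsRing) (V:=R_CompleteNormedModule)) with (b := fun k => b (S N + k)%nat); auto.
    intros n. unfold norm; simpl. unfold abs; simpl. rewrite Rabs_Rabsolu. apply Hab. }
  eapply Rle_trans. apply Series_Rabs. exact Ea.
  apply Series_le; auto. intros n; split. apply Rabs_pos. apply Hab.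
Qed.

Lemma int_series (g : R -> R) (v : nat -> R -> R) (b : nat -> R) (T : R) :
  0 <= T ->
  (forall x, is_series (fun n => v n x) (g x)) ->
  (forall n x, Rabs (v n x) <= b n) ->
  ex_series b ->
  (forall n, ex_RInt (v n) 0 T) ->
  ex_RInt g 0 T ->
  is_series (fun n => RInt (v n) 0 T) (RInt g 0 T).
Proof.
  intros HT Hs Hvb Hb Hv Hg.
  assert (HS : forall N, is_RInt (fun x => sum_n (fun n => v n x) N) 0 T (sum_n (fun n => RInt (v n) 0 T) N)).
  { induction N.
    - apply (is_RInt_ext (V:=R_NormedModule) (v 0%nat)). intros; rewrite sum_O; auto.
      rewrite sum_O. apply (RInt_correct (V:=R_CompleteNormedModule)). auto.
    - rewrite sum_Sn. apply (is_RInt_ext (V:=R_NormedModule) (fun x => plus (sum_n (fun n => v n x) N) (v (S N) x))).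
      intros; rewrite sum_Sn; auto.
      apply (is_RInt_plus (V:=R_NormedModule)). auto. apply (RInt_correct (V:=R_CompleteNormedModule)). auto. }
  assert (HD : forall N, Rabs (RInt g 0 T - sum_n (fun n => RInt (v n) 0 T) N) <= T * (Series b - sum_n b N)).
  { intros N.
    assert (H1 : is_RInt (fun x => g x - sum_n (fun n => v n x) N) 0 T (RInt g 0 T - sum_n (fun n => RInt (v n) 0 T) N)).
    { apply (is_RInt_minus (V:=R_NormedModule)). apply (RInt_correct (V:=R_CompleteNormedModule)); auto. auto. }
    pose proof H1 as H2.
    apply (is_RInt_unique (V:=R_CompleteNormedModule)) in H2. rewrite <- H2.
    replace T with (T - 0) at 2 by ring.
    apply abs_RInt_le_const. auto. eexists; eauto.
    intros t _. apply tail_bound; auto. }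
  unfold is_series.
  assert (L : is_lim_seq (fun N => RInt g 0 T - (RInt g 0 T - sum_n (fun n => RInt (v n) 0 T) N)) (RInt g 0 T - 0)).
  { apply is_lim_seq_minus'. apply is_lim_seq_const.
    apply is_lim_seq_abs_0.
    apply is_lim_seq_le_le with (u := fun _ => 0) (w := fun N => T * (Series b - sum_n b N)).
    intros n; split. apply Rabs_pos. apply HD.
    apply is_lim_seq_const.
    replace (Finite 0) with (Rbar_mult T 0) by (simpl; f_equal; ring).
    apply is_lim_seq_scal_l. apply tail_lim; auto. }
  rewrite Rminus_0_r in L.
  assert (L2 : is_lim_seq (sum_n (fun n => RInt (v n) 0 T)) (RInt g 0 T)).
  { revert L. apply is_lim_seq_ext. intros N. change (RInt g 0 T - (RInt g 0 T - sum_n (fun n : nat => RInt (v n) 0 T) N) = sum_n (fun n : nat => RInt (v n) 0 T) N). ring. }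
  exact L2.
Qed.

Lemma exp_series t : is_series (fun n => t ^ n / INR (fact n)) (exp t).
Proof.
  unfold exp. destruct (exist_exp t) as [l Hl]. simpl.
  apply is_series_Reals in Hl. revert Hl. apply (is_series_ext (K:=R_AbsRing) (V:=R_NormedModule)). intros n. unfold Rdiv. apply Rmult_comm.
Qed.

Lemma cos_series t : is_series (fun k => (-1) ^ k / INR (fact (2*k)) * t ^ (2*k)) (cos t).
Proof.
  unfold cos. destruct (exist_cos (Rsqr t)) as [l Hl]. simpl.
  apply is_series_Reals in Hl. revert Hl. apply (is_series_ext (K:=R_AbsRing) (V:=R_NormedModule)). intros n. unfold cos_n.
  change (cos_n n * Rsqr t ^ n = (-1) ^ n / INR (fact (2*n)) * t ^ (2*n)). unfold cos_n. rewrite pow_mult. unfold Rsqr. simpl. f_equal. f_equal. ring.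
Qed.

Lemma even_series (w : nat -> R) (L : R) : is_series w L -> (forall k, w (S (2*k)) = 0) ->
  is_series (fun k => w (2*k)%nat) L.
Proof.
  intros H Hodd.
  assert (E : forall K, sum_n (fun k => w (2*k)%nat) K = sum_n w (2*K)).
  { induction K. reflexivity.
    rewrite sum_Sn. replace (2 * S K)%nat with (S (S (2*K))) by lia.
    rewrite !sum_Sn. rewrite IHK. replace (S (2*K)) with (S (2*K)) by lia. rewrite Hodd.
    replace (S (S (2*K))) with (2 * S K)%nat by lia.
    change (sum_n w (2 * K) + w (2 * S K)%nat = sum_n w (2 * K) + 0 + w (2 * S K)%nat). ring. }
  assert (L2 : is_lim_seq (fun K => sum_n w (2*K)) L).
  { apply (is_lim_seq_subseq (sum_n w) L (fun K => 2*K)%nat).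
    - intros P [N HN]. exists N. intros n Hn. apply HN. lia.
    - exact H. }
  assert (L3 : is_lim_seq (sum_n (fun k => w (2*k)%nat)) L).
  { revert L2. apply is_lim_seq_ext. intros; rewrite E; auto. }
  exact L3.
Qed.

Lemma cont_exp_cos a x : continuous (fun t => exp (a * cos t)) x.
Proof. apply (ex_derive_continuous (K:=R_AbsRing) (V:=R_NormedModule)); auto_derive; auto. Qed.
Lemma cont_cos_sin a x : continuous (fun t => cos (a * sin t)) x.
Proof. apply (ex_derive_continuous (K:=R_AbsRing) (V:=R_NormedModule)); auto_derive; auto. Qed.
Lemma cont_sin_sin a x : continuous (fun t => sin (a * sin t)) x.
Proof. apply (ex_derive_continuous (K:=R_AbsRing) (V:=R_NormedModule)); auto_derive; auto. Qed.

Lemma pow_abs_le (c t : R) n : 0 <= c -> Rabs t <= 1 -> Rabs ((c * t) ^ n) <= c ^ n.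
Proof.
  intros Hc Ht. rewrite <- RPow_abs. apply pow_incr. split. apply Rabs_pos.
  rewrite Rabs_mult, (Rabs_right c) by lra. rewrite <- (Rmult_1_r c) at 2.
  apply Rmult_le_compat_l; auto.
Qed.

Lemma half_pow a k : (a/2)^(2*k) = a^(2*k) / 4^k.
Proof.
  unfold Rdiv. rewrite Rpow_mult_distr, pow_inv. rewrite (pow_mult 2). f_equal. f_equal. f_equal. ring.
Qed.

Lemma fact_pos n : 0 < INR (fact n).
Proof. apply INR_fact_lt_0. Qed.

Lemma I_series a : 0 <= a ->
  is_series (fun k => 2*PI * ((a/2)^(2*k) / INR (fact k)^2)) (RInt (fun x => exp (a * cos x)) 0 (2*PI)).
Proof.
  intros ha.
  pose proof PI_RGT_0 as Hpi.
  assert (H := int_series (fun x => exp (a * cos x)) (fun n x => (a * cos x)^n / INR (fact n))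
                (fun n => a^n / INR (fact n)) (2*PI)).
  assert (Hv : forall n, RInt (fun x => (a * cos x)^n / INR (fact n)) 0 (2*PI) = a^n / INR (fact n) * Cn n).
  { intros n. unfold Cn. rewrite <- (RInt_scal (V:=R_CompleteNormedModule)) by apply exR_cos.
    apply RInt_ext. intros x _. rewrite Rpow_mult_distr. unfold scal; simpl; unfold mult; simpl. unfold Rdiv. ring. }
  assert (H' : is_series (fun n => a^n / INR (fact n) * Cn n) (RInt (fun x => exp (a * cos x)) 0 (2*PI))).
  { revert H. intros H. eapply (is_series_ext (K:=R_AbsRing) (V:=R_NormedModule)). 2: apply H.
    - intros n. apply Hv.
    - lra.
    - intros x. apply exp_series.
    - intros n x. unfold Rdiv. rewrite Rabs_mult. rewrite (Rabs_right (/ _)).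
      apply Rmult_le_compat_r. left; apply Rinv_0_lt_compat, fact_pos.
      apply pow_abs_le; auto. apply Rabs_le; apply COS_bound. apply Rle_ge; left; apply Rinv_0_lt_compat, fact_pos.
    - exists (exp a). apply exp_series.
    - intros n. apply (ex_RInt_continuous (V:=R_CompleteNormedModule)). intros; apply (ex_derive_continuous (K:=R_AbsRing) (V:=R_NormedModule)); auto_derive; auto.
    - apply (ex_RInt_continuous (V:=R_CompleteNormedModule)). intros; apply cont_exp_cos. }
  apply even_series in H'.
  - revert H'. apply (is_series_ext (K:=R_AbsRing) (V:=R_NormedModule)). intros k.
    transitivity (a ^ (2*k) * (Cn (2*k)%nat / INR (fact (2*k)))).
    { change (a ^ (2*k) / INR (fact (2*k)) * Cn (2*k)%nat = a ^ (2*k) * (Cn (2*k)%nat / INR (fact (2*k)))).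
      unfold Rdiv; ring. }
    rewrite (rec_even Cn Cn0 Cn_rec). rewrite half_pow.
    pose proof (fact_pos k). match goal with |- ?x = ?y => change (@eq R x y) end. field. split. apply pow_nonzero; lra. lra.
  - intros j. rewrite (rec_odd Cn Cn1 Cn_rec). ring.
Qed.

Lemma J_series a : 0 <= a ->
  is_series (fun k => 2*PI * ((-1)^k * (a/2)^(2*k) / INR (fact k)^2)) (RInt (fun x => cos (a * sin x)) 0 (2*PI)).
Proof.
  intros ha.
  pose proof PI_RGT_0 as Hpi.
  assert (H := int_series (fun x => cos (a * sin x)) (fun k x => (-1) ^ k / INR (fact (2*k)) * (a * sin x) ^ (2*k))
                (fun k => (a^2)^k / INR (fact k)) (2*PI)).
  assert (Hv : forall k, RInt (fun x => (-1) ^ k / INR (fact (2*k)) * (a * sin x) ^ (2*k)) 0 (2*PI)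
                = (-1) ^ k / INR (fact (2*k)) * a^(2*k) * Sn (2*k)).
  { intros k. unfold Sn. rewrite Rmult_assoc. rewrite <- (RInt_scal (V:=R_CompleteNormedModule)) by apply exR_sin.
    rewrite <- (RInt_scal (V:=R_CompleteNormedModule)).
    2: { apply (ex_RInt_scal (V:=R_CompleteNormedModule)). apply exR_sin. }
    apply RInt_ext. intros x _. rewrite Rpow_mult_distr. unfold scal; simpl; unfold mult; simpl. ring. }
  assert (H' : is_series (fun k => (-1) ^ k / INR (fact (2*k)) * a^(2*k) * Sn (2*k)) (RInt (fun x => cos (a * sin x)) 0 (2*PI))).
  { eapply (is_series_ext (K:=R_AbsRing) (V:=R_NormedModule)). 2: apply H.
    - intros n. apply Hv.
    - lra.
    - intros x. apply cos_series.
    - intros n x. rewrite Rabs_mult. unfold Rdiv. rewrite Rabs_mult. rewrite <- RPow_abs, Rabs_m1, pow1.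
      rewrite (Rabs_right (/ _)) by (apply Rle_ge; left; apply Rinv_0_lt_compat, fact_pos).
      rewrite <- pow_mult.
      apply Rle_trans with (/ INR (fact (2*n)) * a ^ (2*n)).
      { rewrite Rmult_1_l. apply Rmult_le_compat_l. left; apply Rinv_0_lt_compat, fact_pos.
        apply pow_abs_le; auto. apply Rabs_le; apply SIN_bound. }
      rewrite Rmult_comm. apply Rmult_le_compat_l. apply pow_le; auto.
      apply Rinv_le_contravar. apply fact_pos. apply le_INR. apply fact_le. lia.
    - exists (exp (a^2)). generalize (exp_series (a^2)). apply (is_series_ext (K:=R_AbsRing) (V:=R_NormedModule)). intros; reflexivity.
    - intros n. apply (ex_RInt_continuous (V:=R_CompleteNormedModule)). intros; apply (ex_derive_continuous (K:=R_AbsRing) (V:=R_NormedModule)); auto_derive; auto.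
    - apply (ex_RInt_continuous (V:=R_CompleteNormedModule)). intros; apply cont_cos_sin. }
  revert H'. apply (is_series_ext (K:=R_AbsRing) (V:=R_NormedModule)). intros k.
  transitivity ((-1) ^ k * a ^ (2*k) * (Sn (2*k)%nat / INR (fact (2*k)))).
  { change ((-1) ^ k / INR (fact (2*k)) * a ^ (2*k) * Sn (2*k)%nat = (-1) ^ k * a ^ (2*k) * (Sn (2*k)%nat / INR (fact (2*k)))).
    unfold Rdiv; ring. }
  rewrite (rec_even Sn Sn0 Sn_rec). rewrite half_pow.
  pose proof (fact_pos k). match goal with |- ?x = ?y => change (@eq R x y) end. field. split. apply pow_nonzero; lra. lra.
Qed.

Lemma sin_int0 a : RInt (fun x => sin (a * sin x)) 0 (2*PI) = 0.
Proof.
  set (h := fun x => sin (a * sin x)).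
  assert (Ex : ex_RInt h 0 (2*PI)).
  { apply (ex_RInt_continuous (V:=R_CompleteNormedModule)). intros; apply cont_sin_sin. }
  assert (H1 : is_RInt h (-1*0+2*PI) (-1*(2*PI)+2*PI) (RInt h (2*PI) 0)).
  { replace (-1*0+2*PI) with (2*PI) by ring. replace (-1*(2*PI)+2*PI) with 0 by ring.
    apply (RInt_correct (V:=R_CompleteNormedModule)). apply (ex_RInt_swap (V:=R_NormedModule)). auto. }
  apply (is_RInt_comp_lin (V:=R_NormedModule)) in H1.
  assert (H2 : is_RInt h 0 (2*PI) (RInt h (2*PI) 0)).
  { revert H1. apply (is_RInt_ext (V:=R_NormedModule)). intros x _.
    unfold h, scal; simpl; unfold mult; simpl.
    replace (-1 * x + 2 * PI) with (-x + 2*PI) by ring.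
    rewrite sin_plus, sin_2PI, cos_2PI, sin_neg.
    replace (a * (- sin x * 1 + cos (- x) * 0)) with (- (a * sin x)) by ring.
    rewrite sin_neg. ring. }
  apply (is_RInt_unique (V:=R_CompleteNormedModule)) in H2.
  rewrite <- (opp_RInt_swap (V:=R_CompleteNormedModule) h 0 (2*PI)) in H2 by exact Ex.
  change (RInt h 0 (2*PI) = - RInt h 0 (2*PI)) in H2.
  fold h. lra.
Qed.

Lemma I_pos a : 0 <= a -> 0 < RInt (fun x => exp (a * cos x)) 0 (2*PI).
Proof.
  intros ha. pose proof PI_RGT_0.
  apply Rlt_le_trans with (RInt (fun _ => exp (-a)) 0 (2*PI)).
  - rewrite (RInt_const (V:=R_CompleteNormedModule)). unfold scal; simpl; unfold mult; simpl.
    apply Rmult_lt_0_compat. lra. apply exp_pos.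
  - apply RInt_le. lra. apply (ex_RInt_const (V:=R_NormedModule)).
    apply (ex_RInt_continuous (V:=R_CompleteNormedModule)). intros; apply cont_exp_cos.
    intros x _. assert (-a <= a * cos x).
    { pose proof (COS_bound x). nra. }
    destruct (Rle_lt_or_eq_dec _ _ H0). left; apply exp_increasing; auto. right; f_equal; auto.
Qed.

Lemma I0_eq a : 0 <= a -> I0 a = RInt (fun x => exp (a * cos x)) 0 (2*PI) / (2*PI).
Proof.
  intros ha. pose proof PI_RGT_0. unfold I0. apply is_series_unique.
  pose proof (is_series_scal (K:=R_AbsRing) (V:=R_NormedModule) (/ (2*PI)) _ _ (I_series a ha)) as H1.
  revert H1. unfold scal; simpl; unfold mult; simpl.
  match goal with |- is_series _ ?x -> is_series _ ?y => replace y with x by (unfold Rdiv; ring) end.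
  apply (is_series_ext (K:=R_AbsRing) (V:=R_NormedModule)). intros n.
  match goal with |- ?x = ?y => change (@eq R x y) end. field. repeat split; try lra; try (apply pow_nonzero; apply INR_fact_neq_0); apply INR_fact_neq_0.
Qed.

Lemma J0_eq a : 0 <= a -> J0 a = RInt (fun x => cos (a * sin x)) 0 (2*PI) / (2*PI).
Proof.
  intros ha. pose proof PI_RGT_0. unfold J0. apply is_series_unique.
  pose proof (is_series_scal (K:=R_AbsRing) (V:=R_NormedModule) (/ (2*PI)) _ _ (J_series a ha)) as H1.
  revert H1. unfold scal; simpl; unfold mult; simpl.
  match goal with |- is_series _ ?x -> is_series _ ?y => replace y with x by (unfold Rdiv; ring) end.
  apply (is_series_ext (K:=R_AbsRing) (V:=R_NormedModule)). intros n.
  match goal with |- ?x = ?y => change (@eq R x y) end. field. repeat split; try lra; try (apply pow_nonzero; apply INR_fact_neq_0); apply INR_fact_neq_0.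
Qed.

Lemma expR_1 a : 0 < a ->
  expect_R a (fun phi => (Cmod (cexp ((a * cos phi, a * sin phi) : C))) ^ 2) = 1.
Proof.
  intros ha. pose proof PI_RGT_0. pose proof (I_pos a (Rlt_le _ _ ha)) as Ip.
  pose proof (I0_eq a (Rlt_le _ _ ha)) as HI.
  unfold expect_R, density_Phi.
  rewrite (RInt_ext _ (fun x => / (2 * PI * I0 a) * exp (a * cos x))).
  - rewrite (RInt_scal (V:=R_CompleteNormedModule) (fun x => exp (a * cos x))).
    2: apply (ex_RInt_continuous (V:=R_CompleteNormedModule)); intros; apply cont_exp_cos.
    unfold scal; simpl; unfold mult; simpl. rewrite HI. field. lra.
  - intros x _. unfold cexp, Cmod. simpl (Re _). simpl (Im _). simpl fst. simpl snd.
    rewrite pow2_sqrt by (apply Rplus_le_le_0_compat; apply pow2_ge_0).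
    replace ((exp (a * cos x) * cos (a * sin x)) ^ 2 + (exp (a * cos x) * sin (a * sin x)) ^ 2)
      with (exp (a * cos x) ^ 2 * (sin (a * sin x) ^ 2 + cos (a * sin x) ^ 2)) by ring.
    replace (sin (a * sin x) ^ 2 + cos (a * sin x) ^ 2) with 1 by (rewrite <- (sin2_cos2 (a * sin x)); unfold Rsqr; ring).
    replace (- a * cos x) with (- (a * cos x)) by ring. rewrite exp_Ropp.
    pose proof (exp_pos (a * cos x)). match goal with |- ?x = ?y => change (@eq R x y) end. field. rewrite HI. repeat split; try lra.
    apply Rgt_not_eq. apply Rmult_gt_0_compat; auto. apply Rinv_0_lt_compat; lra.
Qed.

Lemma expC a : 0 < a ->
  expect_C a (fun phi => cexp ((a * cos phi, a * sin phi) : C)) = RtoC (J0 a / I0 a).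
Proof.
  intros ha. pose proof PI_RGT_0. pose proof (I_pos a (Rlt_le _ _ ha)) as Ip.
  pose proof (I0_eq a (Rlt_le _ _ ha)) as HI.
  pose proof (J0_eq a (Rlt_le _ _ ha)) as HJ.
  assert (I0p : 0 < I0 a) by (rewrite HI; apply Rmult_gt_0_compat; auto; apply Rinv_0_lt_compat; lra).
  unfold expect_C.
  apply (is_RInt_unique (V:=C_R_CompleteNormedModule)).
  unfold RtoC.
  assert (E : forall x, exp (- a * cos x) / (2 * PI * I0 a) * exp (a * cos x) = / (2 * PI * I0 a)).
  { intros x. replace (- a * cos x) with (- (a * cos x)) by ring. rewrite exp_Ropp.
    pose proof (exp_pos (a * cos x)). field. repeat split; lra. }
  replace (J0 a / I0 a, 0) with (/ (2 * PI * I0 a) * RInt (fun x => cos (a * sin x)) 0 (2*PI),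
                                 / (2 * PI * I0 a) * RInt (fun x => sin (a * sin x)) 0 (2*PI)).
  2: { rewrite sin_int0, HJ. f_equal. field. lra. ring. }
  apply (is_RInt_fct_extend_pair (U:=R_NormedModule) (V:=R_NormedModule)).
  - apply (is_RInt_ext (V:=R_NormedModule) (fun x => / (2 * PI * I0 a) * cos (a * sin x))).
    + intros x _. unfold cexp, density_Phi. simpl. unfold mult; simpl. rewrite <- (E x). unfold scal; simpl; unfold mult; simpl. match goal with |- ?x = ?y => change (@eq R x y) end. ring.
    + apply (is_RInt_scal (V:=R_NormedModule)). apply (RInt_correct (V:=R_CompleteNormedModule)).
      apply (ex_RInt_continuous (V:=R_CompleteNormedModule)). intros; apply cont_cos_sin.
  - apply (is_RInt_ext (V:=R_NormedModule) (fun x => / (2 * PI * I0 a) * sin (a * sin x))).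
    + intros x _. unfold cexp, density_Phi. simpl. unfold mult; simpl. rewrite <- (E x). unfold scal; simpl; unfold mult; simpl. match goal with |- ?x = ?y => change (@eq R x y) end. ring.
    + apply (is_RInt_scal (V:=R_NormedModule)). apply (RInt_correct (V:=R_CompleteNormedModule)).
      apply (ex_RInt_continuous (V:=R_CompleteNormedModule)). intros; apply cont_sin_sin.
Qed.

Theorem mainTheorem13 (a : R) (ha : 0 < a) :
  (expect_C a (fun phi => cexp ((a * cos phi, a * sin phi) : C)) = RtoC (J0 a / I0 a)
   /\ expect_R a (fun phi => (Cmod (cexp ((a * cos phi, a * sin phi) : C))) ^ 2) = 1)
  /\ (J0 a = 0 ->
      expect_C a (fun phi => cexp ((a * cos phi, a * sin phi) : C)) = RtoC 0
      /\ expect_R a (fun phi => (Cmod (cexp ((a * cos phi, a * sin phi) : C))) ^ 2) = 1).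
Proof.
  split. split. apply expC; auto. apply expR_1; auto.
  intros HJ. split. rewrite expC by auto. rewrite HJ. f_equal. unfold Rdiv. ring. apply expR_1; auto.
Qed.
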